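(* Let $m,n,c$ be positive integers, let items and categories be as in the context, and for each category $o\in\{1,\ldots,c\}$ let $n_o$ be the number of items in category $o$ (so $\sum_{o}n_o=m$). Let $\eta>0$, $\beta\ge 0$ and put $\lambda=\eta\beta/m$ and $a_l=2n_l+\lambda n_l^2$ for $l=1,\ldots,c$. Consider user vectors $\mathbf{u}_i(t)\in\mathbb{R}^c$, $i=1,\ldots,n$, $t\in\{0,1,2,\ldots\}$, evolving by $$\mathbf{u}_i(t+1)=\Big(\mathbf{I}_c+\frac{\eta\beta}{m}\mathbf{V}\mathbf{V}^T\Big)\mathbf{u}_i(t)$$ (the user dynamics with $\epsilon=0$, $\gamma=1$), where $\mathbf{V}=[\mathbf{v}_1,\ldots,\mathbf{v}_m]$. Fix a time $t$ and suppose there is an index $k\in\{1,\ldots,c\}$ with $\sum_{l\neq k}a_l>0$ such that for every pair of users $(i,j)$, $$u_i^{(k)}(t)\,u_j^{(k)}(t)\ \ge\ \frac{\|\mathbf{u}_i(t)\|_2\,\|\mathbf{u}_j(t)\|_2}{\sqrt{1+\Big(\frac{a_k}{\sum_{l\neq k}a_l}\Big)^2}}.$$ Then: (i) for every pair $(i,j)$, $\mathbf{u}_i(t+1)^T\mathbf{u}_j(t+1)\ge\mathbf{u}_i(t)^T\mathbf{u}_j(t)$; (ii) if moreover $n_k=\max_{o\in\{1,\ldots,c\}}n_o$, then for every pair $(i,j)$ and every positive integer $\tau$, $\mathbf{u}_i(t+\tau)^T\mathbf{u}_j(t+\tau)\ge\mathbf{u}_i(t+\tau-1)^T\mathbf{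u}_j(t+\tau-1)$.
   Context: There are $m$ items and $c$ categories; each item belongs to exactly one category, and the vector of an item $j$ in category $o$ is $\mathbf{v}_j=\mathbf{e}_o\in\mathbb{R}^c$, the $o$-th standard basis vector. $u_i^{(k)}(t)$ denotes the $k$-th coordinate of $\mathbf{u}_i(t)$. $\mathbf{I}_c$ is the $c\times c$ identity. *)

(* Defs.v *)
From HB Require Import structures.
From mathcomp Require Import all_boot all_order all_algebra.
From mathcomp Require Import reals.
Set Implicit Arguments. Unset Strict Implicit. Unset Printing Implicit Defensive.
Import Order.TTheory GRing.Theory Num.Theory.
Local Open Scope ring_scope.

(* Item-category matrix V = [v_1 ... v_m], v_j = e_{cat j} (c x m). *)
Definition itemV (R : ringType) (m c : nat) (cat : 'I_m -> 'I_c) : 'M[R]_(c, m) :=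
  \matrix_(o < c, j < m) (cat j == o)%:R.

Definition ncat (m c : nat) (cat : 'I_m -> 'I_c) (o : 'I_c) : nat :=
  #|[set j : 'I_m | cat j == o]|.

Definition dotc (R : ringType) (c : nat) (x y : 'cV[R]_c) : R :=
  \sum_(o < c) x o 0 * y o 0.

Definition norm2 (R : rcfType) (c : nat) (x : 'cV[R]_c) : R :=
  Num.sqrt (dotc x x).

(* Main.v *)
Require Import Defs.
From HB Require Import structures.
From mathcomp Require Import all_boot all_order all_algebra.
From mathcomp Require Import reals.
From mathcomp Require Import ring lra zify.
Import Order.TTheory GRing.Theory Num.Theory.
Local Open Scope ring_scope.
Set Implicit Arguments. Unset Strict Implicit.
Lemma lagrange (R : realDomainType) c (a b : 'I_c -> R) :
  (\sum_o a o * b o) ^+ 2 <= (\sum_o a o * a o) * (\sum_o b o * b o).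
Proof.
have H : 0 <= \sum_l \sum_m (a l * b m - a m * b l) ^+ 2.
  by apply: sumr_ge0 => l _; apply: sumr_ge0 => m _; apply: sqr_ge0.
have E : \sum_l \sum_m (a l * b m - a m * b l) ^+ 2 =
   2 * ((\sum_o a o * a o) * (\sum_o b o * b o) - (\sum_o a o * b o) ^+ 2).
  have -> : \sum_l \sum_m (a l * b m - a m * b l) ^+ 2 =
     \sum_l \sum_m ((a l * a l) * (b m * b m) + (a m * a m) * (b l * b l)
        - 2 * ((a l * b l) * (a m * b m))).
    by apply: eq_bigr => l _; apply: eq_bigr => m _; ring.
  rewrite expr2 !big_distrlr /=.
  under eq_bigr => l _ do rewrite sumrB big_split /=.
  rewrite sumrB big_split /=.
  have -> : \sum_l \sum_m (a m * a m * (b l * b l)) = \sum_l \sum_m (a l * a l * (b m * b m)).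
    rewrite exchange_big /=; done.
  have -> : \sum_l \sum_m 2 * (a l * b l * (a m * b m)) = 2 * \sum_l \sum_m (a l * b l * (a m * b m)).
    rewrite mulr_sumr; apply: eq_bigr => l _; by rewrite mulr_sumr.
  ring.
by move: H; rewrite E pmulr_rge0 // subr_ge0.
Qed.

Lemma cs (R : rcfType) c (x y : 'I_c -> R) :
  \sum_o `|x o * y o| <= Num.sqrt (\sum_o x o * x o) * Num.sqrt (\sum_o y o * y o).
Proof.
have L := lagrange (fun o => `|x o|) (fun o => `|y o|).
have ex : forall (z : 'I_c -> R) o, `|z o| * `|z o| = z o * z o.
  by move=> z o; rewrite -expr2 real_normK ?num_real // expr2.
move: L; rewrite /=. set A := \sum_o `|x o| * `|x o|. set B := \sum_o `|y o| * `|y o|. have -> : A = \sum_o x o * x o by apply: eq_bigr => o _; apply: ex. have -> : B = \sum_o y o * y o by apply: eq_bigr => o _; apply: ex.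
under eq_bigr => o _ do rewrite -normrM.
set s := \sum_o _ => L.
have s0 : 0 <= s by apply: sumr_ge0.
rewrite -sqrtrM; last by apply: sumr_ge0 => o _; rewrite -expr2 sqr_ge0.
by rewrite -(ger0_norm s0) -sqrtr_sqr ler_wsqrtr.
Qed.

Lemma key (R : rcfType) c (x y a : 'I_c -> R) (k : 'I_c)
  (ha : forall o, 0 <= a o) (hS : 0 < \sum_(l < c | l != k) a l)
  (h : Num.sqrt (\sum_o x o * x o) * Num.sqrt (\sum_o y o * y o) /
       Num.sqrt (1 + (a k / \sum_(l < c | l != k) a l) ^+ 2) <= x k * y k) :
  0 <= \sum_o a o * (x o * y o).
Proof.
set S := \sum_(l < c | l != k) a l in hS h.
set X := Num.sqrt _ in h; set Y := Num.sqrt _ in h.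
set r := a k / S in h.
have r0 : 0 <= r by rewrite divr_ge0 // ltW.
have C1 : Num.sqrt (1 + r ^+ 2) <= 1 + r.
  rewrite -[X in _ <= X]ger0_norm ?addr_ge0 // -sqrtr_sqr ler_wsqrtr //; nra.
have C0 : 0 < Num.sqrt (1 + r ^+ 2) by rewrite sqrtr_gt0; nra.
have XY0 : 0 <= X * Y by rewrite mulr_ge0 ?sqrtr_ge0.
have pq0 : 0 <= x k * y k.
  apply: le_trans h; rewrite divr_ge0 ?sqrtr_ge0 //.
have h2 : X * Y <= x k * y k * (1 + r).
  move: h; rewrite ler_pdivrMr // => h; apply: le_trans h _.
  by rewrite ler_wpM2l.
have h3 : X * Y * S <= x k * y k * (S + a k).
  have -> : S + a k = (1 + r) * S by rewrite /r mulrDl mul1r mulfVK ?gt_eqF.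
  by rewrite mulrA ler_wpM2r // ltW.
have hcs := cs x y; rewrite -/X -/Y in hcs.
rewrite (bigD1 k) //= in hcs.
rewrite ger0_norm // in hcs.
have h4 : \sum_(l < c | l != k) `|x l * y l| <= X * Y - x k * y k by rewrite lerBrDl.
have h5 : - (S * \sum_(l < c | l != k) `|x l * y l|) <= \sum_(l < c | l != k) a l * (x l * y l).
  rewrite mulr_sumr -sumrN; apply: ler_sum => l hl.
  have alS : a l <= S.
    rewrite /S (bigD1 l) //= lerDl; apply: sumr_ge0 => *; exact: ha.
  have : - `|x l * y l| <= x l * y l by rewrite lerNl -normrN ler_norm.
  have := normr_ge0 (x l * y l); have := ha l; nra.
rewrite (bigD1 k) //=.
have : S * \sum_(l < c | l != k) `|x l * y l| <= S * (X * Y - x k * y k) by rewrite ler_wpM2l // ltW.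
have := ha k; nra.
Qed.

Lemma VVt_entry (R : ringType) m c (cat : 'I_m -> 'I_c) (o o' : 'I_c) :
  (itemV R cat *m (itemV R cat)^T) o o' = (o == o')%:R * (ncat cat o)%:R.
Proof.
rewrite !mxE.
under eq_bigr => j _ do rewrite !mxE.
have [<-|ne] := eqVneq o o'.
  rewrite mul1r.
  transitivity (\sum_(j | cat j == o) (1 : R)).
    by rewrite [RHS]big_mkcond /=; apply: eq_bigr => j _; case: (cat j == o); rewrite ?mulr1 ?mulr0.
  by rewrite sumr_const /ncat; congr (_ *+ _); apply: eq_card => j; rewrite inE.
rewrite mul0r big1 // => j _.
case: eqP => [->|]; last by rewrite mul0r.
by rewrite (negbTE ne) mulr0.
Qed.

Lemma step_entry (R : ringType) m c (cat : 'I_m -> 'I_c) (lam : R) (x : 'cV[R]_c) o :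
  ((1%:M + lam *: (itemV R cat *m (itemV R cat)^T)) *m x) o 0 =
  (1 + lam * (ncat cat o)%:R) * x o 0.
Proof.
rewrite mulmxDl mul1mx -scalemxAl !mxE.
rewrite mulrDl mul1r; congr (_ + _).
rewrite (bigD1 o) //= big1 ?addr0.
  by rewrite VVt_entry eqxx mul1r mulrA.
by move=> o' ne; rewrite VVt_entry eq_sym (negbTE ne) mul0r mul0r.
Qed.


Unset Implicit Arguments. Set Strict Implicit.

Theorem corollary1 (R : realType) (m n c : nat)
  (hm : (0 < m)%N) (hn : (0 < n)%N) (hc : (0 < c)%N)
  (cat : 'I_m -> 'I_c) (eta beta : R) (heta : 0 < eta) (hbeta : 0 <= beta)
  (u : 'I_n -> nat -> 'cV[R]_c)
  (hdyn : forall (i : 'I_n) (s : nat),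
     u i s.+1 = (1%:M + (eta * beta / m%:R) *: (itemV R cat *m (itemV R cat)^T)) *m u i s)
  (t : nat) (k : 'I_c)
  (hpos : 0 < \sum_(l < c | l != k)
            (2 * (ncat cat l)%:R + (eta * beta / m%:R) * (ncat cat l)%:R ^+ 2))
  (hcone : forall i j : 'I_n,
     norm2 (u i t) * norm2 (u j t) /
       Num.sqrt (1 + ((2 * (ncat cat k)%:R + (eta * beta / m%:R) * (ncat cat k)%:R ^+ 2)
          / (\sum_(l < c | l != k)
               (2 * (ncat cat l)%:R + (eta * beta / m%:R) * (ncat cat l)%:R ^+ 2))) ^+ 2)
     <= u i t k 0 * u j t k 0) :
  (forall i j : 'I_n, dotc (u i t) (u j t) <= dotc (u i t.+1) (u j t.+1)) /\
  (ncat cat k = \max_(o < c) ncat cat o ->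
   forall (i j : 'I_n) (tau : nat), (0 < tau)%N ->
     dotc (u i (t + tau - 1)%N) (u j (t + tau - 1)%N) <= dotc (u i (t + tau)%N) (u j (t + tau)%N)).
Proof.
set lam := eta * beta / m%:R.
have lam0 : 0 <= lam by rewrite /lam divr_ge0 ?mulr_ge0 // ltW.
set S := \sum_(l < c | l != k) _ in hpos hcone.
set C := Num.sqrt _ in hcone.
have C0 : 0 < C by rewrite sqrtr_gt0; apply: (lt_le_trans ltr01); rewrite lerDl sqr_ge0.
set a := fun o : 'I_c => 2 * (ncat cat o)%:R + lam * (ncat cat o)%:R ^+ 2.
have a0 : forall o, 0 <= a o by move=> o; rewrite /a /=; apply: addr_ge0; apply: mulr_ge0; rewrite ?sqr_ge0 ?ler0n.
have ent : forall i s o, u i s.+1 o 0 = (1 + lam * (ncat cat o)%:R) * u i s o 0.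
  by move=> i s o; rewrite hdyn step_entry.
have diff : forall i j s, dotc (u i s.+1) (u j s.+1) - dotc (u i s) (u j s)
    = lam * \sum_o a o * (u i s o 0 * u j s o 0).
  move=> i j s; rewrite /dotc -sumrB mulr_sumr; apply: eq_bigr => o _.
  rewrite !ent /a; ring.
pose cond s := forall i j : 'I_n,
  norm2 (u i s) * norm2 (u j s) / C <= u i s k 0 * u j s k 0.
have mono : forall s, cond s -> forall i j : 'I_n, dotc (u i s) (u j s) <= dotc (u i s.+1) (u j s.+1).
  move=> s hcs i j; rewrite -subr_ge0 diff; apply: mulr_ge0 => //.
  apply: (@key R c (fun o => u i s o 0) (fun o => u j s o 0) a k) => //.
  exact: (hcs i j).
split; first exact: mono.
move=> hmax.
have nle : forall o, (ncat cat o <= ncat cat k)%N by move=> o; rewrite hmax; apply: leq_bigmax.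
pose d o := 1 + lam * (ncat cat o)%:R.
have d1 : forall o, 1 <= d o by move=> o; rewrite /d lerDl mulr_ge0.
have dle : forall o, d o <= d k by move=> o; rewrite /d lerD2l ler_wpM2l // ler_nat.
have dk0 : 0 <= d k by apply: le_trans (d1 k); exact: ler01.
have stepc : forall s, cond s -> cond s.+1.
  move=> s hcs.
  have nl : forall i, norm2 (u i s.+1) <= d k * norm2 (u i s).
    move=> i; rewrite /norm2 /dotc.
    rewrite -[d k in X in _ <= X]ger0_norm // -sqrtr_sqr -sqrtrM ?sqr_ge0 //.
    rewrite ler_wsqrtr // mulr_sumr; apply: ler_sum => o _.
    rewrite !ent -/(d o).
    have := d1 o; have := dle o; move: (d o) (d k) (u i s o 0) => p q z hp hq; have pq : p * p <= q * q by nra. rewrite expr2 (_ : p * z * (p * z) = p * p * (z * z)); last by ring. by rewrite ler_wpM2r // -expr2 sqr_ge0.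
  move=> i j.
  apply: (@le_trans _ _ ((d k * norm2 (u i s)) * (d k * norm2 (u j s)) / C)).
    apply: ler_wpM2r; first by rewrite invr_ge0 ltW.
    by apply: ler_pM; rewrite ?sqrtr_ge0 ?nl.
  have -> : d k * norm2 (u i s) * (d k * norm2 (u j s)) / C
          = (d k * d k) * (norm2 (u i s) * norm2 (u j s) / C) by ring.
  rewrite !ent -/(d k).
  have -> : d k * u i s k 0 * (d k * u j s k 0) = (d k * d k) * (u i s k 0 * u j s k 0) by ring.
  by rewrite ler_wpM2l ?mulr_ge0 ?hcs.
have allc : forall q, cond (t + q)%N.
  elim=> [|q IH]; first by rewrite addn0; exact: hcone.
  by rewrite addnS; apply: stepc.
move=> i j tau htau.
have -> : (t + tau - 1)%N = (t + (tau - 1))%N by lia.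
have -> : (t + tau)%N = (t + (tau - 1)).+1 by lia.
exact: mono.
Qed.
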